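(* The model checking problem for the logic $\mathsf{NGL}$ over finite GCGMPs (given a finite GCGMP with integer payoffs, an initial configuration $c$, and an $\mathsf{NGL}$ state formula $\varphi$, decide whether $\mathfrak{M},c\models_{(\mathcal{S}^p,\mathcal{S}^o)}\varphi$) is undecidable when the proponents' strategy class is $\mathcal{S}^p=\mathsf{S}^{pr}$ (perfect-recall state-based strategies) and the opponents' strategy class is $\mathcal{S}^o=\mathsf{S}^{m}$ (memoryless state-based strategies). This holds already for models with two players and formulae without nested strategic modalities, and it holds in each of the following two restricted cases: (i) formulae containing no arithmetic constraints; (ii) models in which all guards are state-based.
   Context: GCGMP (guarded concurrent game model with payoffs): a finite set of players $\mathsf{Ag}$, states $S$, action sets $\mathsf{Act}_a$, a deterministic transition function $\mathsf{out}:S\times\prod_a\mathsf{Act}_a\to S$, atomic propositions $\Pi$ with labelling $\mathsf{L}:S\to 2^\Pi$, a payoff function $\mathsf{payoff}:\mathsf{Ag}\times S\times\prod_a\mathsf{Act}_a\to\mathbb{D}$, for each player $a$ a guard $g_a:S\times\mathsf{Act}_a\to\mathsf{ACF}(X,\{a\})$ (a Boolean combination of comparisons $t_1*t_2$, $*\in\{<,\le,=,\ge,>\}$, between sums of constants from a set $X\ni 0$ and the variable $v_a$ denoting $a$'s accumulated payoff), such that for each state at least one action is enabled for every value of $v_a$, and discount factors $d_a\in[0,1]$. A guard is state-based if it contains no variables (it is a variable-free constraint formula). A configuration is $(s,\vec u)$, $\vec u$ the vector of accumulated payoffs; the transition from $(s,\vec u)$ under profile $\vec\alpha$ at step $l$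 goes to $(\mathsf{out}(s,\vec\alpha),\vec u')$ provided each $u_a$ satisfies $g_a(s,\alpha_a)$, with $u'_a=u_a+d_a^l\,\mathsf{payoff}_a(s,\vec\alpha)$. Plays are infinite sequences of configurations and action profiles following this transition. A strategy of player $a$ maps histories to actions enabled by the guard at the last configuration; a perfect-recall state-based strategy is a function $S^*\to\mathsf{Act}_a$ (depending only on the sequence of states visited), a memoryless state-based strategy is a function $S\to\mathsf{Act}_a$. $\mathsf{NGL}$ state formulae: $\varphi::=p\mid \mathsf{ac}\mid\neg\varphi\mid\varphi\wedge\varphi\mid\langle\langle A\rangle\rangle\mathbf{X}\varphi\mid\langle\langle A\rangle\rangle\mathbf{G}\varphi\mid\langle\langle A\rangle\rangle(\varphi\,\mathbf{U}\,\varphi)$, with $p\in\Pi$, $A\subseteq\mathsf{Ag}$, and $\mathsf{ac}$ an arithmetic constraint over the variables $v_a$. Semantics at a configuration $c$ (step count $l$, initially $1$): $p$ holds iff $p\in\mathsf{L}$ of the state of $c$; $\mathsf{ac}$ holds iff the accumulated payoff vector of $c$ satisfies it; $\langle\langle A\rangle\rangle\gamma$ holds iff there is a collective $\mathcal{S}^p$-strategy for $A$ such that for every collective $\mathcal{S}^o$-strategy of $\mathsf{Ag}\setminus A$ the resulting unique outcome play from $c$ satisfies $\gamma$, where $\mathbf{X},\mathbf{G},\mathbf{U}$ have their usual LTL meaning over the sequence of configurations of the play. *)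

(* Defs.v *)
From Stdlib Require Import ZArith QArith List.
Import ListNotations.

(* Two players (the theorem concerns two-player models).               *)
Inductive agent : Type := Ag1 | Ag2.

Inductive term : Type :=
| TCst : Z -> term            (* a constant (from X, see wellformedness) *)
| TVar : agent -> term
| TAdd : term -> term -> term.

Inductive cmp : Type := CLt | CLe | CEq | CGe | CGt.

Inductive acf : Type :=
| ACmp : cmp -> term -> term -> acf
| ANot : acf -> acf
| AAnd : acf -> acf -> acf.

Fixpoint eval_term (u : agent -> Q) (t : term) : Q :=
  match t with
  | TCst z => inject_Z z
  | TVar a => u a
  | TAdd t1 t2 => eval_term u t1 + eval_term u t2
  end.

Definition eval_cmp (o : cmp) (x y : Q) : Prop :=
  match o with
  | CLt => x < y | CLe => x <= y | CEq => x == y | CGe => y <= x | CGt => y < x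
  end.

Fixpoint acf_sat (u : agent -> Q) (f : acf) : Prop :=
  match f with
  | ACmp o t1 t2 => eval_cmp o (eval_term u t1) (eval_term u t2)
  | ANot f => ~ acf_sat u f
  | AAnd f g => acf_sat u f /\ acf_sat u g
  end.

Fixpoint term_ok (X : list Z) (P : agent -> Prop) (t : term) : Prop :=
  match t with
  | TCst z => In z X
  | TVar a => P a
  | TAdd t1 t2 => term_ok X P t1 /\ term_ok X P t2
  end.

Fixpoint acf_ok (X : list Z) (P : agent -> Prop) (f : acf) : Prop :=
  match f with
  | ACmp _ t1 t2 => term_ok X P t1 /\ term_ok X P t2
  | ANot f => acf_ok X P f
  | AAnd f g => acf_ok X P f /\ acf_ok X P g
  end.

(* Finite two-player GCGMP with integer payoffs.
   States are 0 .. nst-1, actions of player a are 0 .. nact a - 1,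
   atomic propositions are natural numbers.                            *)
Record GCGMP : Type := mkGCGMP {
  nst    : nat;
  nact   : agent -> nat;
  out    : nat -> (agent -> nat) -> nat;
  lab    : nat -> nat -> bool;
  pay    : agent -> nat -> (agent -> nat) -> Z;
  guard  : agent -> nat -> nat -> acf;
  consts : list Z;
  disc   : agent -> Q
}.

Definition profile_ok (M : GCGMP) (al : agent -> nat) : Prop :=
  forall a, (al a < nact M a)%nat.

Definition wf_GCGMP (M : GCGMP) : Prop :=
  (0 < nst M)%nat /\
  (forall s al, (s < nst M)%nat -> profile_ok M al -> (out M s al < nst M)%nat) /\
  In 0%Z (consts M) /\
  (forall a, 0 <= disc M a /\ disc M a <= 1) /\
  (forall a s x, (s < nst M)%nat -> (x < nact M a)%nat ->
      acf_ok (consts M) (fun b => b = a) (guard M a s x)) /\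
  (forall a s (v : Q), (s < nst M)%nat ->
      exists x, (x < nact M a)%nat /\ acf_sat (fun _ => v) (guard M a s x)).

Definition state_based_guards (M : GCGMP) : Prop :=
  forall a s x, (s < nst M)%nat -> (x < nact M a)%nat ->
    acf_ok (consts M) (fun _ => False) (guard M a s x).

Definition enabled (M : GCGMP) (a : agent) (s : nat) (u : agent -> Q) (x : nat) : Prop :=
  (x < nact M a)%nat /\ acf_sat u (guard M a s x).

Definition upd (M : GCGMP) (l : nat) (s : nat) (al : agent -> nat) (u : agent -> Q)
  : agent -> Q :=
  fun a => u a + Qpower (disc M a) (Z.of_nat l) * inject_Z (pay M a s al).

(* Histories from configuration (s0,u0) with step count l, represented by
   the sequence of visited states and the current payoff vector. The
   transition out of the k-th configuration (k = 0,1,...) happens at step l+k. *)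
Inductive hist (M : GCGMP) (s0 : nat) (u0 : agent -> Q) (l : nat)
  : list nat -> (agent -> Q) -> Prop :=
| hist0 : hist M s0 u0 l [s0] u0
| histS : forall ss u al,
    hist M s0 u0 l ss u ->
    (forall a, enabled M a (last ss 0%nat) u (al a)) ->
    hist M s0 u0 l (ss ++ [out M (last ss 0%nat) al])
                   (upd M (l + pred (length ss)) (last ss 0%nat) al u).

Definition legal_pr (M : GCGMP) (s0 : nat) (u0 : agent -> Q) (l : nat) (a : agent)
  (sg : list nat -> nat) : Prop :=
  forall ss u, hist M s0 u0 l ss u -> enabled M a (last ss 0%nat) u (sg ss).

Definition legal_ml (M : GCGMP) (s0 : nat) (u0 : agent -> Q) (l : nat) (a : agent)
  (sg : nat -> nat) : Prop :=
  forall ss u, hist M s0 u0 l ss u ->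
    enabled M a (last ss 0%nat) u (sg (last ss 0%nat)).

(* the combined action function: proponents (A a = true) use their
   perfect-recall strategy, opponents their memoryless one *)
Definition combine (A : agent -> bool) (sp : agent -> list nat -> nat)
  (so : agent -> nat -> nat) : agent -> list nat -> nat :=
  fun a ss => if A a then sp a ss else so a (last ss 0%nat).

(* prefix of length n+1 of the outcome play *)
Fixpoint run (M : GCGMP) (s0 : nat) (u0 : agent -> Q) (l : nat)
  (act : agent -> list nat -> nat) (n : nat) : list nat * (agent -> Q) :=
  match n with
  | O => ([s0], u0)
  | S n' =>
      let r := run M s0 u0 l act n' in
      let ss := fst r in
      let s := last ss 0%nat in
      let al := fun a => act a ss in
      (ss ++ [out M s al], upd M (l + n') s al (snd r))
  end.

Inductive form : Type :=
| FProp : nat -> form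
| FAc   : acf -> form
| FNot  : form -> form
| FAnd  : form -> form -> form
| FX    : (agent -> bool) -> form -> form
| FG    : (agent -> bool) -> form -> form
| FU    : (agent -> bool) -> form -> form -> form.

(* M, (s,u) |= phi  with step count l, for (S^p, S^o) = (S^pr, S^m) *)
Fixpoint sat (M : GCGMP) (s : nat) (u : agent -> Q) (l : nat) (f : form) : Prop :=
  let strat (A : agent -> bool) (goal : (nat -> list nat * (agent -> Q)) -> Prop) :=
    exists sp : agent -> list nat -> nat,
      (forall a, A a = true -> legal_pr M s u l a (sp a)) /\
      forall so : agent -> nat -> nat,
        (forall a, A a = false -> legal_ml M s u l a (so a)) ->
        goal (run M s u l (combine A sp so)) in
  match f with
  | FProp p => lab M s p = true
  | FAc c => acf_sat u c
  | FNot g => ~ sat M s u l g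
  | FAnd g h => sat M s u l g /\ sat M s u l h
  | FX A g => strat A (fun pl =>
        sat M (last (fst (pl 1%nat)) 0%nat) (snd (pl 1%nat)) (l + 1) g)
  | FG A g => strat A (fun pl => forall i,
        sat M (last (fst (pl i)) 0%nat) (snd (pl i)) (l + i) g)
  | FU A g h => strat A (fun pl => exists i,
        sat M (last (fst (pl i)) 0%nat) (snd (pl i)) (l + i) h /\
        forall j, (j < i)%nat ->
          sat M (last (fst (pl j)) 0%nat) (snd (pl j)) (l + j) g)
  end.

Fixpoint no_strat (f : form) : Prop :=
  match f with
  | FProp _ | FAc _ => True
  | FNot g => no_strat g
  | FAnd g h => no_strat g /\ no_strat h
  | FX _ _ | FG _ _ | FU _ _ _ => False
  end.

Fixpoint no_nesting (f : form) : Prop :=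
  match f with
  | FProp _ | FAc _ => True
  | FNot g => no_nesting g
  | FAnd g h => no_nesting g /\ no_nesting h
  | FX _ g | FG _ g => no_strat g
  | FU _ g h => no_strat g /\ no_strat h
  end.

Fixpoint no_ac (f : form) : Prop :=
  match f with
  | FProp _ => True
  | FAc _ => False
  | FNot g | FX _ g | FG _ g => no_ac g
  | FAnd g h | FU _ g h => no_ac g /\ no_ac h
  end.

Fixpoint form_ok (X : list Z) (f : form) : Prop :=
  match f with
  | FProp _ => True
  | FAc c => acf_ok X (fun _ => True) c
  | FNot g | FX _ g | FG _ g => form_ok X g
  | FAnd g h | FU _ g h => form_ok X g /\ form_ok X h
  end.

Record MCinstance : Type := mkInst {
  i_model : GCGMP;
  i_state : nat;
  i_pay   : agent -> Z;
  i_form  : form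
}.

Definition MC (x : MCinstance) : Prop :=
  sat (i_model x) (i_state x) (fun a => inject_Z (i_pay x a)) 1%nat (i_form x).

Definition basic_ok (x : MCinstance) : Prop :=
  wf_GCGMP (i_model x) /\ (i_state x < nst (i_model x))%nat /\
  form_ok (consts (i_model x)) (i_form x) /\ no_nesting (i_form x).

Definition case_no_ac (x : MCinstance) : Prop :=
  basic_ok x /\ no_ac (i_form x).

Definition case_state_guards (x : MCinstance) : Prop :=
  basic_ok x /\ state_based_guards (i_model x).

(* Synthetic (un)decidability, as in the Coq Library of Undecidability
   Proofs: decidability = existence of a boolean decider; undecidability
   of a problem = its decidability would decide a known undecidable
   problem, here halting of Minsky two-counter machines.               *)
Definition decidable {X : Type} (P : X -> Prop) : Prop :=
  exists f : X -> bool, forall x, P x <-> f x = true.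

(* decidability of Q on the promise domain D *)
Definition decidable_on {X : Type} (D Q : X -> Prop) : Prop :=
  exists f : X -> bool, forall x, D x -> (Q x <-> f x = true).

(* Two-counter machines: counters indexed by bool; halting = the program
   counter leaves the program. *)
Inductive cm_instr : Type :=
| CInc : bool -> nat -> cm_instr            (* increment r, goto j *)
| CDec : bool -> nat -> nat -> cm_instr.    (* if r = 0 goto k else decrement r, goto j *)

Definition cm_conf : Type := (nat * nat * nat)%type.  (* pc, counter false, counter true *)

Definition cm_step (P : list cm_instr) (c : cm_conf) : cm_conf :=
  let '(pc, c0, c1) := c in
  match nth_error P pc with
  | None => c
  | Some (CInc false j) => (j, S c0, c1)
  | Some (CInc true j) => (j, c0, S c1)
  | Some (CDec false j k) =>
      match c0 with O => (k, c0, c1) | S c0' => (j, c0', c1) end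
  | Some (CDec true j k) =>
      match c1 with O => (k, c0, c1) | S c1' => (j, c0, c1') end
  end.

Definition CM_HALT (P : list cm_instr) : Prop :=
  exists n, let '(pc, _, _) := Nat.iter n (cm_step P) (0%nat, 0%nat, 0%nat) in
            (length P <= pc)%nat.

Definition undecidable_on {X : Type} (D Q : X -> Prop) : Prop :=
  decidable_on D Q -> decidable CM_HALT.

(* Main.v *)
Require Import Defs.
From Stdlib Require Import ZArith QArith List Lia.
Import ListNotations.

Lemma Qpp1 : forall p, Qpower_positive 1 p == 1.
Proof. induction p; simpl in *; try reflexivity; unfold Qpower_positive in *; simpl; rewrite IHp; reflexivity. Qed.
Lemma Qpow1 : forall z, Qpower 1 z == 1.
Proof. intros [|p|p]; simpl; try reflexivity. apply Qpp1. rewrite Qpp1; reflexivity. Qed.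

Lemma qstep : forall q n x d y, q == inject_Z x -> y = (x + d)%Z ->
  q + Qpower 1 n * inject_Z d == inject_Z y.
Proof. intros; subst. rewrite Qpow1, H, inject_Z_plus. ring. Qed.

Lemma enc_div : forall x t, (t < 5)%nat -> ((5*x+t)/5 = x)%nat.
Proof. intros. symmetry. apply (Nat.div_unique _ _ _ t); lia. Qed.
Lemma enc_mod : forall x t, (t < 5)%nat -> ((5*x+t) mod 5 = t)%nat.
Proof. intros. symmetry. apply (Nat.mod_unique _ _ x t); lia. Qed.

Open Scope nat_scope.
Definition ag (r:bool) : agent := if r then Ag2 else Ag1.
Definition agb (a b: agent) : bool :=
  match a,b with Ag1,Ag1 | Ag2,Ag2 => true | _,_ => false end.
Definition TT : acf := ACmp CEq (TCst 0) (TCst 0).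
Definition dtag (r:bool) := if r then 2 else 1.
Definition ztag (r:bool) := if r then 4 else 3.

Section M.
Variable P : list cm_instr.

Definition mout (s:nat) (al: agent->nat) : nat :=
 match nth_error P (s/5) with
 | None => s
 | Some (CInc r j) => 5 * Nat.min j (length P) + 0
 | Some (CDec r j k) => if al (ag r) =? 1 then 5*Nat.min j (length P) + dtag r
                        else 5 * Nat.min k (length P) + ztag r
 end.

Definition mpay (a:agent) (s:nat) (al:agent->nat) : Z :=
 match nth_error P (s/5) with
 | Some (CInc r _) => if agb a (ag r) then 1%Z else 0%Z
 | Some (CDec r _ _) => if agb a (ag r) && (al (ag r) =? 1) then (-1)%Z else 0%Z
 | None => 0%Z end.

Definition mguard (g:bool) (a:agent) (s x:nat) : acf :=
  if g then match nth_error P (s/5) with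
  | Some (CDec r _ _) => if agb a (ag r) then
       (if x =? 1 then ACmp CLe (TCst 1) (TVar a) else ACmp CLt (TVar a) (TCst 1)) else TT
  | _ => TT end else TT.

Definition mlab (s p : nat) : bool :=
  match p with 0 => length P <=? s/5 | 1 => s mod 5 =? 3 | 2 => s mod 5 =? 4 | _ => false end.

Definition model (g:bool) : GCGMP :=
  mkGCGMP (5 * S (length P)) (fun _ => 2) mout mlab mpay (mguard g) [0%Z;1%Z] (fun _ => 1%Q).

Definition Rel (c : cm_conf) (s : nat) (u : agent -> Q) : Prop :=
  let '(pc,c0,c1) := c in
  s / 5 = Nat.min pc (length P) /\ u Ag1 == inject_Z (Z.of_nat c0) /\
  u Ag2 == inject_Z (Z.of_nat c1) /\ (s mod 5 = 3 -> c0 = 0) /\ (s mod 5 = 4 -> c1 = 0).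

Definition branch_ok (c : cm_conf) (al : agent -> nat) : Prop :=
  let '(pc,c0,c1) := c in
  match nth_error P pc with
  | Some (CDec r _ _) => (al (ag r) =? 1) = (0 <? (if r then c1 else c0))
  | _ => True end.

Definition hact (a : agent) (c : cm_conf) : nat :=
  let '(pc,c0,c1) := c in
  match nth_error P pc with
  | Some (CDec r _ _) => if agb a (ag r) then (if 0 <? (if r then c1 else c0) then 1 else 0) else 0
  | _ => 0 end.

Lemma instr_eq : forall pc, nth_error P (Nat.min pc (length P)) = nth_error P pc.
Proof.
  intros pc. destruct (le_lt_dec (length P) pc).
  - rewrite Nat.min_r by lia. rewrite (proj2 (nth_error_None P pc)) by lia.
    apply nth_error_None; lia.
  - rewrite Nat.min_l by lia. reflexivity.
Qed.

Lemma step_rel : forall g c s u al l, Rel c s u -> branch_ok c al ->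
  Rel (cm_step P c) (mout s al) (upd (model g) l s al u).
Proof.
  intros g [[pc c0] c1] s u al l [Hs [H1 [H2 [H3 H4]]]] Hb.
  unfold branch_ok in Hb. unfold mout, upd, cm_step; cbn [model disc pay out]. unfold mpay.
  rewrite Hs, instr_eq.
  destruct (nth_error P pc) as [[[|] j|[|] j k]|] eqn:E; cbn -[Nat.div Nat.modulo Nat.mul Nat.min Qpower] in *.
  - split. apply enc_div; lia. split. eapply qstep; eauto; lia.
    split. eapply qstep; eauto; lia. rewrite enc_mod by lia. lia.
  - split. apply enc_div; lia. split. eapply qstep; eauto; lia.
    split. eapply qstep; eauto; lia. rewrite enc_mod by lia. lia.
  - destruct c1 as [|c1]; cbn -[Nat.div Nat.modulo Nat.mul Nat.min Qpower] in Hb; rewrite Hb; cbn -[Nat.div Nat.modulo Nat.mul Nat.min Qpower].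
    + split. apply enc_div; lia. split. eapply qstep; eauto; lia.
      split. eapply qstep; eauto; lia. rewrite enc_mod by lia. lia.
    + split. apply enc_div; lia. split. eapply qstep; eauto; lia.
      split. eapply qstep; eauto; lia. rewrite enc_mod by lia. lia.
  - destruct c0 as [|c0]; cbn -[Nat.div Nat.modulo Nat.mul Nat.min Qpower] in Hb; rewrite Hb; cbn -[Nat.div Nat.modulo Nat.mul Nat.min Qpower].
    + split. apply enc_div; lia. split. eapply qstep; eauto; lia.
      split. eapply qstep; eauto; lia. rewrite enc_mod by lia. lia.
    + split. apply enc_div; lia. split. eapply qstep; eauto; lia.
      split. eapply qstep; eauto; lia. rewrite enc_mod by lia. lia.
  - rewrite <- Hs. repeat split; auto; eapply qstep; eauto; lia.
Qed.

Ltac cb := cbn -[Nat.div Nat.modulo Nat.mul Nat.min Qpower Qeq Qle Qlt inject_Z Qplus Qmult] in *.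

Ltac finb := cbn in *; match goal with |- context [match ?c with 0 => _ | S _ => _ end] =>
  destruct c; first [reflexivity | lia] end.

Lemma guarded_branch : forall c s u al, Rel c s u ->
  (forall a, enabled (model true) a s u (al a)) -> branch_ok c al.
Proof.
  intros [[pc c0] c1] s u al [Hs [H1 [H2 [H3 H4]]]] He.
  unfold branch_ok. unfold enabled in He. cbn [model guard nact] in He.
  unfold mguard in He. rewrite Hs, instr_eq in He.
  destruct (nth_error P pc) as [[r j|r j k]|] eqn:E; auto.
  destruct (He (ag r)) as [Hlt Hg]. destruct r; cb;
  destruct (al _ =? 1) eqn:Ea; cb.
  - rewrite H2, <- Zle_Qle in Hg. finb.
  - rewrite H2, <- Zlt_Qlt in Hg. finb.
  - rewrite H1, <- Zle_Qle in Hg. finb.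
  - rewrite H1, <- Zlt_Qlt in Hg. finb.
Qed.

Lemma honest_branch : forall c, branch_ok c (fun a => hact a c).
Proof.
  intros [[pc c0] c1]. unfold branch_ok, hact.
  destruct (nth_error P pc) as [[r j|r j k]|] eqn:E; auto.
  destruct r; cb; [destruct c1|destruct c0]; reflexivity.
Qed.

Lemma honest_enabled : forall g c s u a, Rel c s u -> enabled (model g) a s u (hact a c).
Proof.
  intros g [[pc c0] c1] s u a [Hs [H1 [H2 [H3 H4]]]].
  unfold enabled, hact. cbn [model guard nact]. unfold mguard. rewrite Hs, instr_eq.
  destruct g.
  2:{ split. destruct (nth_error P pc) as [[r j|r j k]|]; try lia.
      destruct (agb a (ag r)); [destruct (0 <? _)|]; lia. cbn; reflexivity. }
  destruct (nth_error P pc) as [[r j|r j k]|] eqn:E; try (split; [lia|cbn; reflexivity]).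
  destruct (agb a (ag r)) eqn:Ea; [|split; [lia|cbn; reflexivity]].
  assert (a = ag r) by (destruct a, r; cbn in *; congruence). subst a.
  destruct r; cb.
  - destruct c1; cb; split; try lia; first [rewrite H2, <- Zlt_Qlt | rewrite H2, <- Zle_Qle]; lia.
  - destruct c0; cb; split; try lia; first [rewrite H1, <- Zlt_Qlt | rewrite H1, <- Zle_Qle]; lia.
Qed.

Definition all : agent -> bool := fun _ => true.
Definition fTT : form := FNot (FAnd (FProp 0) (FNot (FProp 0))).
Definition ge0 a := FAc (ACmp CLe (TCst 0) (TVar a)).
Definition eq0 a := FAc (ACmp CEq (TVar a) (TCst 0)).
Definition fimp p q := FNot (FAnd p (FNot q)).
Definition fok := FAnd (ge0 Ag1) (FAnd (ge0 Ag2) (FAnd (fimp (FProp 1) (eq0 Ag1)) (fimp (FProp 2) (eq0 Ag2)))).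
Definition form1 := FU all fTT (FProp 0).
Definition form2 := FU all fok (FAnd (FProp 0) fok).

Lemma ok_of_Rel : forall g c s u l, Rel c s u -> sat (model g) s u l fok.
Proof.
  intros g [[pc c0] c1] s u l [Hs [H1 [H2 [H3 H4]]]].
  cbn [sat fok ge0 eq0 fimp acf_sat eval_cmp eval_term model lab mlab].
  split. rewrite H1, <- Zle_Qle; lia.
  split. rewrite H2, <- Zle_Qle; lia.
  split; intros [Hl Hn]; apply Hn; apply Nat.eqb_eq in Hl.
  - rewrite H1, H3 by exact Hl. reflexivity.
  - rewrite H2, H4 by exact Hl. reflexivity.
Qed.

Lemma ok_branch : forall g c s u al l l', Rel c s u ->
  sat (model g) (mout s al) (upd (model g) l s al u) l' fok -> branch_ok c al.
Proof.
  intros g [[pc c0] c1] s u al l l' HR Hok.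
  pose proof HR as [Hs [H1 [H2 [H3 H4]]]].
  unfold branch_ok.
  cbn [sat fok ge0 eq0 fimp acf_sat eval_cmp eval_term model lab mlab] in Hok.
  destruct Hok as [G1 [G2 [Z1 Z2]]].
  unfold mout, upd in *. cbn [model disc pay] in *. unfold mpay in *.
  rewrite Hs, instr_eq in *.
  destruct (nth_error P pc) as [[r j|r j k]|] eqn:E; auto.
  destruct r; cb; destruct (al _ =? 1) eqn:Ea; cb.
  - assert (Hq : u Ag2 + Qpower 1 (Z.of_nat l) * inject_Z (-1) == inject_Z (Z.of_nat c1 - 1))
      by (eapply qstep; eauto; lia).
    rewrite Hq, <- Zle_Qle in G2. finb.
  - rewrite enc_mod in Z2 by lia. cbn in Z2.
    assert (Hq : u Ag2 + Qpower 1 (Z.of_nat l) * inject_Z 0 == inject_Z (Z.of_nat c1))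
      by (eapply qstep; eauto; lia).
    destruct (Qeq_dec (u Ag2 + Qpower 1 (Z.of_nat l) * inject_Z 0) (inject_Z 0)) as [Hz|Hz].
    + rewrite Hq in Hz. apply (proj1 (inject_Z_injective _ _)) in Hz. finb.
    + exfalso; apply Z2; split; auto.
  - assert (Hq : u Ag1 + Qpower 1 (Z.of_nat l) * inject_Z (-1) == inject_Z (Z.of_nat c0 - 1))
      by (eapply qstep; eauto; lia).
    rewrite Hq, <- Zle_Qle in G1. finb.
  - rewrite enc_mod in Z1 by lia. cbn in Z1.
    assert (Hq : u Ag1 + Qpower 1 (Z.of_nat l) * inject_Z 0 == inject_Z (Z.of_nat c0))
      by (eapply qstep; eauto; lia).
    destruct (Qeq_dec (u Ag1 + Qpower 1 (Z.of_nat l) * inject_Z 0) (inject_Z 0)) as [Hz|Hz].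
    + rewrite Hq in Hz. apply (proj1 (inject_Z_injective _ _)) in Hz. finb.
    + exfalso; apply Z1; split; auto.
Qed.
End M.

Definition inst (g : bool) (P : list cm_instr) : MCinstance :=
  mkInst (model P g) 0 (fun _ => 0%Z) (if g then form1 else form2).


Section R.
Variable M : GCGMP.
Variables (s0 : nat) (u0 : agent -> Q) (l : nat) (act : agent -> list nat -> nat).

Lemma run_S : forall n, run M s0 u0 l act (S n) =
  (fst (run M s0 u0 l act n) ++ [out M (last (fst (run M s0 u0 l act n)) 0) (fun a => act a (fst (run M s0 u0 l act n)))],
   upd M (l + n) (last (fst (run M s0 u0 l act n)) 0) (fun a => act a (fst (run M s0 u0 l act n))) (snd (run M s0 u0 l act n))).
Proof. reflexivity. Qed.

Lemma run_length : forall n, length (fst (run M s0 u0 l act n)) = S n.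
Proof. induction n; [reflexivity|]. rewrite run_S. cbn [fst]. rewrite length_app, IHn. cbn; lia. Qed.

Lemma run_hist : (forall a ss u, hist M s0 u0 l ss u -> enabled M a (last ss 0) u (act a ss)) ->
  forall n, hist M s0 u0 l (fst (run M s0 u0 l act n)) (snd (run M s0 u0 l act n)).
Proof.
  intros Hl n; induction n. constructor.
  rewrite run_S. cbn [fst snd].
  pose proof (histS M s0 u0 l _ _ (fun a => act a (fst (run M s0 u0 l act n))) IHn
     (fun a => Hl a _ _ IHn)) as H.
  rewrite run_length in H. exact H.
Qed.

Lemma hist_len : forall ss u, hist M s0 u0 l ss u -> length ss >= 1.
Proof. intros ss u H; induction H; cbn; [lia|]. rewrite length_app; lia. Qed.
End R.

Definition iter (P : list cm_instr) k := Nat.iter k (cm_step P) (0,0,0).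

Lemma sim_gen : forall P g s0 u0 l act n, Rel P (0,0,0) s0 u0 ->
  (forall k, k < n -> Rel P (iter P k) (last (fst (run (model P g) s0 u0 l act k)) 0) (snd (run (model P g) s0 u0 l act k)) ->
     branch_ok P (iter P k) (fun a => act a (fst (run (model P g) s0 u0 l act k)))) ->
  Rel P (iter P n) (last (fst (run (model P g) s0 u0 l act n)) 0) (snd (run (model P g) s0 u0 l act n)).
Proof.
  intros P g s0 u0 l act n H0 Hb. induction n. exact H0.
  assert (IH : Rel P (iter P n) (last (fst (run (model P g) s0 u0 l act n)) 0) (snd (run (model P g) s0 u0 l act n)))
    by (apply IHn; intros; apply Hb; auto; lia).
  rewrite run_S. cbn [fst snd]. rewrite last_last.
  apply (step_rel P g). exact IH. apply Hb; auto.
Qed.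

Lemma hist_rel : forall P s0 u0 l ss u, Rel P (0,0,0) s0 u0 -> hist (model P true) s0 u0 l ss u ->
  Rel P (iter P (length ss - 1)) (last ss 0) u.
Proof.
  intros P s0 u0 l ss u H0 H. induction H. exact H0.
  pose proof (hist_len _ _ _ _ _ _ H) as Hlen.
  rewrite last_last, length_app. cbn [length].
  replace (length ss + 1 - 1) with (S (length ss - 1)) by lia.
  cbn [iter Nat.iter]. fold (Nat.iter (length ss - 1) (cm_step P) (0,0,0)).
  apply (step_rel P true). exact IHhist. eapply guarded_branch; eauto.
Qed.

Definition hsp (P : list cm_instr) (a : agent) (ss : list nat) : nat := hact P a (iter P (length ss - 1)).

Lemma honest_run : forall P g s0 u0 l so n, Rel P (0,0,0) s0 u0 ->
  Rel P (iter P n) (last (fst (run (model P g) s0 u0 l (Defs.combine all (hsp P) so) n)) 0)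
    (snd (run (model P g) s0 u0 l (Defs.combine all (hsp P) so) n)).
Proof.
  intros. apply sim_gen; auto. intros k _ _.
  unfold Defs.combine, all, hsp. rewrite run_length. replace (S k - 1) with k by lia.
  apply honest_branch.
Qed.

Lemma Rel0 : forall P, Rel P (0,0,0) 0 (fun _ => inject_Z 0).
Proof. intros P. cbn. repeat split; try reflexivity; discriminate. Qed.

Lemma halt_of_Rel : forall P n s u, Rel P (iter P n) s u -> mlab P s 0 = true -> CM_HALT P.
Proof.
  intros P n s u HR Hl. exists n. fold (iter P n). destruct (iter P n) as [[pc c0] c1].
  destruct HR as [Hs _]. unfold mlab in Hl. apply Nat.leb_le in Hl. lia.
Qed.

Lemma lab_of_Rel : forall P n s u, Rel P (iter P n) s u ->
  (let '(pc, _, _) := iter P n in length P <= pc) -> mlab P s 0 = true.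
Proof.
  intros P n s u HR Hl. destruct (iter P n) as [[pc c0] c1].
  destruct HR as [Hs _]. unfold mlab. apply Nat.leb_le. lia.
Qed.

Lemma mc1 : forall P, MC (inst true P) <-> CM_HALT P.
Proof.
  intros P. unfold MC. cbn [inst i_model i_state i_pay i_form form1 sat]. split.
  - intros [sp [Hleg Hg]].
    destruct (Hg (fun _ _ => 0)) as [i [Hh _]]. { intros a Ha; discriminate. }
    eapply halt_of_Rel; [|exact Hh].
    apply sim_gen. apply Rel0. intros k _ HR.
    eapply guarded_branch. exact HR. intros a.
    pose proof (run_hist (model P true) 0 (fun _ => inject_Z 0) 1 (Defs.combine all sp (fun _ _ => 0))) as Hr.
    refine (_ (Hr _ k)).
    + intros Hh'. exact (Hleg a eq_refl _ _ Hh').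
    + intros a' ss u Hh'. exact (Hleg a' eq_refl _ _ Hh').
  - intros [n Hn]. exists (hsp P). split.
    + intros a _ ss u Hh. unfold hsp. apply honest_enabled.
      apply (hist_rel P 0 (fun _ => inject_Z 0) 1); auto. apply Rel0.
    + intros so _. exists n. split.
      * eapply lab_of_Rel; [|exact Hn]. apply honest_run, Rel0.
      * intros j _ [H1 H2]. contradiction.
Qed.

Lemma mc2 : forall P, MC (inst false P) <-> CM_HALT P.
Proof.
  intros P. unfold MC. cbn [inst i_model i_state i_pay i_form form2 sat]. split.
  - intros [sp [Hleg Hg]].
    destruct (Hg (fun _ _ => 0)) as [i [[Hh Hok] Hj]]. { intros a Ha; discriminate. }
    eapply halt_of_Rel; [|exact Hh].
    apply sim_gen. apply Rel0. intros k Hk HR.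
    assert (Hok' : sat (model P false) (last (fst (run (model P false) 0 (fun _ => inject_Z 0) 1 (Defs.combine all sp (fun _ _ => 0)) (S k))) 0)
        (snd (run (model P false) 0 (fun _ => inject_Z 0) 1 (Defs.combine all sp (fun _ _ => 0)) (S k))) (1 + S k) fok).
    { destruct (Nat.eq_dec (S k) i) as [<-|Hne]. exact Hok. apply Hj; lia. }
    rewrite run_S in Hok'. cbn [fst snd] in Hok'. rewrite last_last in Hok'.
    eapply (ok_branch P false). exact HR. exact Hok'.
  - intros [n Hn]. exists (hsp P). split.
    + intros a _ ss u Hh. unfold hsp.
      unfold enabled, hact. cbn [model guard nact mguard]. split; [|cbn; reflexivity].
      destruct (iter P (length ss - 1)) as [[pc c0] c1].
      destruct (nth_error P pc) as [[r j|r j k]|]; try lia.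
      destruct (agb a (ag r)); [destruct (0 <? _)|]; lia.
    + intros so _. exists n. split. split.
      * eapply lab_of_Rel; [|exact Hn]. apply honest_run, Rel0.
      * eapply ok_of_Rel. apply honest_run, Rel0.
      * intros j _. eapply ok_of_Rel. apply honest_run, Rel0.
Qed.

Lemma wf_model : forall P g, wf_GCGMP (model P g).
Proof.
  intros P g. unfold wf_GCGMP. cbn [model nst nact out consts disc guard].
  split; [lia|]. split.
  { intros s al Hs _. unfold mout.
    destruct (nth_error P (s/5)) as [[r j|r j k]|]; try lia.
    destruct r, (al _ =? 1); cbn [dtag ztag]; lia. }
  split; [left; reflexivity|]. split.
  { intros a; split; unfold Qle; cbn; lia. }
  split.
  { intros a s x _ _. unfold mguard. destruct g; [|cbn; auto].
    destruct (nth_error P (s/5)) as [[r j|r j k]|]; cbn; auto.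
    destruct (agb a (ag r)), (x =? 1); cbn; auto. }
  { intros a s v _. unfold mguard. destruct g; [|exists 0; split; [lia|reflexivity]].
    destruct (nth_error P (s/5)) as [[r j|r j k]|]; try (exists 0; split; [lia|reflexivity]).
    destruct (agb a (ag r)); [|exists 0; split; [lia|reflexivity]].
    destruct (Qlt_le_dec v 1) as [Hv|Hv].
    - exists 0; split; [lia|]. cbn. exact Hv.
    - exists 1; split; [lia|]. cbn. exact Hv. }
Qed.

Lemma basic : forall g P, basic_ok (inst g P).
Proof.
  intros g P. unfold basic_ok. cbn [inst i_model i_state i_form].
  split. apply wf_model. split. cbn [model nst]. lia.
  destruct g; cbn; repeat split; auto.
Qed.

Theorem mainTheorem2 :
  undecidable_on case_no_ac MC /\ undecidable_on case_state_guards MC.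
Proof.
  split; intros [f Hf].
  - exists (fun P => f (inst true P)). intros P. rewrite <- mc1. apply Hf.
    split. apply basic. cbn; auto.
  - exists (fun P => f (inst false P)). intros P. rewrite <- mc2. apply Hf.
    split. apply basic. intros a s x _ _. cbn. auto.
Qed.
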